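(* Let $\mathbb{K}\subseteq\mathcal{K}\subseteq\mathcal{A}$ be field extensions such that $\mathcal{K}\subseteq\mathcal{A}$ is finite, separable and normal with Galois group $G$. Assume $G=NH$, where $H$ and $N$ are subgroups with $N\cap H=\{1\}$ and $N$ is generated by an element $\sigma$ central in $G$. Set $\mathcal{B}=\mathcal{A}^H$. Then $\mathcal{B}[X,\sigma,0]\subseteq\mathcal{A}[X,\sigma,0]$ is a centrally $(\mathbb{K}H)^*$-Galois extension.
   Context: $(\mathbb{K}H)^*$ is the dual Hopf algebra of the group algebra $\mathbb{K}H$, with $\{p_x\}_{x\in H}$ the dual basis; $\mathcal{A}$ is a $(\mathbb{K}H)^*$-comodule algebra via $\rho(a)=\sum_{x\in H}x(a)\otimes p_x$, with coinvariants $\mathcal{A}^H=\mathcal{B}$. The Ore extension $\mathcal{A}[X,\sigma,0]$ is the free left $\mathcal{A}$-module on $1,X,X^2,\dots$ with $X^nX^m=X^{n+m}$ and $Xa=\sigma(a)X$; $\mathcal{B}[X,\sigma,0]$ is its subalgebra (as $\sigma$ commutes with $H$). It is a comodule algebra via $\rho(aX^n)=\sum_x x(a)X^n\otimes p_x$, with coinvariants $\mathcal{B}[X,\sigma,0]$. For a comodule algebra $\mathcal{C}$ over a commutative Hopf algebra $\mathcal{H}$, an extension of coinvariants $\mathcal{C}'\subseteq\mathcal{C}$ is $\mathcal{H}$-Galois if $\mathcal{C}\otimes_{\mathcal{C}'}\mathcal{C}\to\mathcal{C}\otimes\mathcal{H}$, $c\otimes x\mapsto\sum cx_{\langle0\rangle}\otimes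 x_{\langle1\rangle}$, is bijective; $\mathcal{C}'\subseteq\mathcal{C}$ is centrally $\mathcal{H}$-Galois if the center $Z(\mathcal{C})$ is a subcomodule and $Z(\mathcal{C})^{\mathrm{co}\mathcal{H}}\subseteq Z(\mathcal{C})$ is $\mathcal{H}$-Galois with $Z(\mathcal{C})$ faithfully flat over $Z(\mathcal{C})^{\mathrm{co}\mathcal{H}}$. *)

(* Defs.v *)
From HB Require Import structures.
From mathcomp Require Import all_boot all_order all_algebra all_fingroup all_solvable all_field.
Set Implicit Arguments. Unset Strict Implicit. Unset Printing Implicit Defensive.
Import GRing.Theory.
Local Open Scope ring_scope.

Section Generic.
Variables (T : zmodType) (one : T) (mul : T -> T -> T).

(* A (left) module over the subset S of T, carried by the subgroup [sm_dom]
   of the abelian group [sm_car], with action [sm_act] (only elements of S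
   are required to act as module scalars). *)
Record smod := SMod {
  sm_car : zmodType;
  sm_dom : sm_car -> Prop;
  sm_act : T -> sm_car -> sm_car }.
Arguments sm_dom : clear implicits.
Arguments sm_act : clear implicits.

Definition subgroupP (W : zmodType) (d : W -> Prop) :=
  [/\ d 0, forall x y, d x -> d y -> d (x + y) & forall x, d x -> d (- x)].

Definition additive_on (W V : zmodType) (d : W -> Prop) (g : W -> V) :=
  forall x y, d x -> d y -> g (x + y) = g x + g y.

Definition is_smod (S : T -> Prop) (M : smod) :=
  subgroupP (sm_dom M) /\
  [/\ forall s m, S s -> sm_dom M m -> sm_dom M (sm_act M s m),
      forall s, S s -> additive_on (sm_dom M) (sm_act M s),
      forall s t m, S s -> S t -> sm_dom M m ->
         sm_act M (s + t) m = sm_act M s m + sm_act M t m,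
      forall s t m, S s -> S t -> sm_dom M m ->
         sm_act M (mul s t) m = sm_act M s (sm_act M t m)
    & forall m, sm_dom M m -> sm_act M one m = m].

Definition balanced (S : T -> Prop) (P Q : smod) (V : zmodType)
    (f : sm_car P -> sm_car Q -> V) :=
  [/\ forall p, sm_dom P p -> additive_on (sm_dom Q) (f p),
      forall q, sm_dom Q q -> additive_on (sm_dom P) (f^~ q)
    & forall s p q, S s -> sm_dom P p -> sm_dom Q q ->
        f (sm_act P s p) q = f p (sm_act Q s q)].

Definition is_tensor (S : T -> Prop) (P Q : smod) (W : zmodType)
    (d : W -> Prop) (beta : sm_car P -> sm_car Q -> W) :=
  [/\ subgroupP d,
      forall p q, sm_dom P p -> sm_dom Q q -> d (beta p q),
      balanced S beta
    & forall (V : zmodType) (f : sm_car P -> sm_car Q -> V), balanced S f ->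
        (exists g : W -> V, additive_on d g /\
           forall p q, sm_dom P p -> sm_dom Q q -> g (beta p q) = f p q)
        /\ (forall g1 g2 : W -> V, additive_on d g1 -> additive_on d g2 ->
           (forall p q, sm_dom P p -> sm_dom Q q -> g1 (beta p q) = f p q) ->
           (forall p q, sm_dom P p -> sm_dom Q q -> g2 (beta p q) = f p q) ->
           forall w, d w -> g1 w = g2 w)].

Definition is_slinear (P Q : smod) (S : T -> Prop) (f : sm_car P -> sm_car Q) :=
  [/\ forall p, sm_dom P p -> sm_dom Q (f p),
      additive_on (sm_dom P) f
    & forall s p, S s -> sm_dom P p -> f (sm_act P s p) = sm_act Q s (f p)].

Definition flat (S : T -> Prop) (M : smod) :=
  forall (P Q : smod) (f : sm_car P -> sm_car Q),
    is_smod S P -> is_smod S Q -> is_slinear S f ->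
    (forall p p', sm_dom P p -> sm_dom P p' -> f p = f p' -> p = p') ->
  forall (W1 W2 : zmodType) (d1 : W1 -> Prop) (d2 : W2 -> Prop)
         (b1 : sm_car P -> sm_car M -> W1) (b2 : sm_car Q -> sm_car M -> W2),
    is_tensor S d1 b1 -> is_tensor S d2 b2 ->
  forall g : W1 -> W2, additive_on d1 g -> (forall w, d1 w -> d2 (g w)) ->
    (forall p m, sm_dom P p -> sm_dom M m -> g (b1 p m) = b2 (f p) m) ->
    forall w w', d1 w -> d1 w' -> g w = g w' -> w = w'.

Definition faithfully_flat (S : T -> Prop) (M : smod) :=
  flat S M /\
  forall (P : smod), is_smod S P ->
  forall (W : zmodType) (d : W -> Prop) (b : sm_car P -> sm_car M -> W),
    is_tensor S d b -> (forall w, d w -> w = 0) ->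
    forall p, sm_dom P p -> p = 0.

(* The (KH)^*-comodule structure rho(c) = sum_(h in H) coact h c (x) p_h is
   encoded by the components [coact h] (I = H, a finite type).
   C (x) (KH)^* is identified with functions H -> C via the basis (p_h). *)
Variables (I : finType) (coact : I -> T -> T).

Definition centerP (z : T) := forall x, mul z x = mul x z.

(* coinvariants: rho(c) = c (x) 1, with 1 = sum_h p_h *)
Definition coinvP (c : T) := forall h, coact h c = c.

Definition Zmod : smod := SMod centerP mul.

(* Galois map  Z (x)_{Z^co} Z -> Z (x) (KH)^*,  c (x) x |-> sum_h c (h.x) (x) p_h *)
Definition galois_map (c x : T) : {ffun I -> T} := [ffun h => mul c (coact h x)].

Definition Zco (z : T) := centerP z /\ coinvP z.

Definition centrally_galois (C' : T -> Prop) :=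
  [/\ forall c, C' c <-> coinvP c,
      forall z h, centerP z -> centerP (coact h z),
      @is_tensor Zco Zmod Zmod _
        (fun f : {ffun I -> T} => forall h, centerP (f h)) galois_map
    & faithfully_flat Zco Zmod].

End Generic.

(* The Ore extension A[X, s, 0], elements represented by their coefficient *)
(* sequence as polynomials: sum_i a_i X^i, with X a = s(a) X, hence         *)
(* (a X^i)(b X^j) = a s^i(b) X^(i+j).                                       *)
Section Ore.
Variables (F : fieldType) (L : splittingFieldType F).

Definition ore_mul (s : gal_of (fullv : {vspace L})) (p q : {poly L}) : {poly L} :=
  \sum_(i < size p) \sum_(j < size q)
     (p`_i * (s ^+ i)%g q`_j) *: 'X^(i + j).

Definition ore_coact (H : {group gal_of (fullv : {vspace L})})
    (h : {x : gal_of (fullv : {vspace L}) | x \in H}) (p : {poly L}) : {poly L} :=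
  map_poly (fun a => (val h) a) p.

Definition ore_over (B : {vspace L}) (p : {poly L}) : Prop :=
  forall i, p`_i \in B.
End Ore.

(* Main.v *)
Require Import Defs.
From HB Require Import structures.
From mathcomp Require Import all_boot all_order all_algebra all_fingroup all_solvable all_field.
From Stdlib Require Import Classical ClassicalEpsilon FunctionalExtensionality.
Set Implicit Arguments. Unset Strict Implicit. Unset Printing Implicit Defensive.
Local Open Scope ring_scope.
Import GRing.Theory.

Section OreAlg.
Variables (F : fieldType) (L : splittingFieldType F) (s : gal_of (fullv : {vspace L})).
Local Notation G := (gal_of (fullv : {vspace L})).

Lemma galMf (x y : G) a : (x * y)%g a = y (x a).
Proof. by rewrite galM ?memvf. Qed.

Lemma expg_fix i a : s a = a -> (s ^+ i)%g a = a.
Proof. by move=> sa; elim: i => [|i IH]; rewrite ?expg0 ?gal_id // expgS galMf sa. Qed.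

Lemma expg_ord i a : (#[s]%g %| i)%N -> (s ^+ i)%g a = a.
Proof. by rewrite order_dvdn => /eqP ->; rewrite gal_id. Qed.

Lemma ore_mul_gen (p q : {poly L}) :
  (forall i j, p`_i * (s ^+ i)%g q`_j = p`_i * q`_j) -> ore_mul s p q = p * q.
Proof.
move=> hpq; transitivity ((\poly_(i < size p) p`_i) * (\poly_(j < size q) q`_j)); last by rewrite !coefK.
rewrite /ore_mul !poly_def mulr_suml.
apply: eq_bigr => i _; rewrite mulr_sumr; apply: eq_bigr => j _.
by rewrite hpq -scalerAl -scalerAr scalerA exprD.
Qed.

Definition Zc (q : {poly L}) :=
  (forall i, s q`_i = q`_i) /\ (forall i, q`_i != 0 -> (#[s]%g %| i)%N).

Lemma ore_mulZl (p q : {poly L}) : Zc p -> ore_mul s p q = p * q.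
Proof.
move=> [_ hp]; apply: ore_mul_gen => i j.
by have [->|/hp /expg_ord ->] := eqVneq p`_i 0; rewrite ?mul0r.
Qed.

Lemma ore_mulZr (p q : {poly L}) : (forall j, s q`_j = q`_j) -> ore_mul s p q = p * q.
Proof. by move=> hq; apply: ore_mul_gen => i j; rewrite expg_fix. Qed.

Lemma ore_mulC_l (c : L) (q : {poly L}) : ore_mul s c%:P q = c%:P * q.
Proof.
apply: ore_mul_gen => i j; rewrite coefC; case: i => [|i] /=; last by rewrite !mul0r.
by rewrite expg0 gal_id.
Qed.

Lemma ore_mulE (p q : {poly L}) :
  ore_mul s p q = \sum_(i < size p) p`_i *: ('X^i * map_poly (s ^+ i)%g q).
Proof.
rewrite /ore_mul; apply: eq_bigr => i _.
rewrite /map_poly poly_def mulr_sumr scaler_sumr; apply: eq_bigr => j _.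
by rewrite -scalerAr -exprD scalerA.
Qed.

Lemma ore_mul_Cr (z : {poly L}) (c : L) :
  ore_mul s z c%:P = \poly_(i < size z) (z`_i * (s ^+ i)%g c).
Proof.
have [->|c0] := eqVneq c 0.
  rewrite /ore_mul polyC0 size_poly0 big1; last by move=> i _; rewrite big_ord0.
  by apply/polyP => i; rewrite coef_poly coef0 rmorph0 mulr0 if_same.
rewrite /ore_mul size_polyC c0 poly_def; apply: eq_bigr => i _.
by rewrite big_ord1 coefC eqxx addn0.
Qed.

Lemma Zp_fix (q : {poly L}) : (forall j, s q`_j = q`_j) -> map_poly s q = q.
Proof. by move=> h; apply/polyP => i; rewrite coef_map; apply: h. Qed.

Lemma cent_Z (z : {poly L}) : Defs.centerP (ore_mul s) z <-> Zc z.
Proof.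
split; last first.
  move=> hz x; rewrite ore_mulZl // ore_mulZr; first exact: mulrC. by case: hz.
move=> hz.
have sfix : forall i, s z`_i = z`_i.
  have hX := hz ('X : {poly L}).
  rewrite ore_mulZr in hX; last first.
    by move=> j; rewrite coefX; case: (j == 1)%N; rewrite ?rmorph1 ?rmorph0.
  rewrite ore_mulE size_polyX !big_ord_recl big_ord0 in hX.
  have e1 : (lift ord0 (ord0 : 'I_1) : nat) = 1%N by [].
  have e0 : ((ord0 : 'I_2) : nat) = 0%N by [].
  rewrite e1 e0 !coefX eqxx scale0r add0r addr0 scale1r expr1 expg1 mulrC in hX.
  have hX0 : ('X : {poly L}) != 0 by rewrite polyX_eq0.
  have := mulfI hX0 hX => hzz i.
  by rewrite {2}hzz coef_map.
split => // k zk.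
rewrite order_dvdn; apply/gal_eqP => c _; rewrite gal_id.
have := congr1 (fun p : {poly L} => p`_k) (hz c%:P); rewrite ore_mul_Cr ore_mulC_l.
rewrite coef_poly coefCM; case: ltnP => [_|]; last first.
  by move=> /(nth_default 0) => zk0; rewrite zk0 eqxx in zk.
by rewrite mulrC => /(mulIf zk); apply.
Qed.

End OreAlg.

Section Mat.
Variables (F : fieldType) (L : splittingFieldType F) (s : gal_of (fullv : {vspace L})).
Local Notation G := (gal_of (fullv : {vspace L})).

Lemma galfM (g : G) (a b : L) : g (a * b) = g a * g b.
Proof. exact: rmorphM. Qed.
Lemma galf1 (g : G) : g 1 = 1.
Proof. exact: rmorph1. Qed.

Lemma indep (P : pred G) (c_ : G -> L) x : P x -> c_ x != 0 ->
  {in P &, forall y z : G, y != z -> exists2 a, s a = a & y a != z a} ->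
  exists2 a, s a = a & \sum_(y | P y) c_ y * y a != 0.
Proof.
have [n] := ubnP #|P|; elim: n c_ x P => // n IHn c_ x P lePn Px nz_cx dist.
rewrite ltnS (cardD1x Px) in lePn; move/IHn: lePn => {n IHn}/=IH_P.
have [/eqfun_inP c_Px'_0 | ] := boolP [forall (y | P y && (y != x)), c_ y == 0].
  exists 1; first by rewrite galf1.
  rewrite (bigD1 x Px) /= galf1 mulr1.
  by rewrite big1 ?addr0 // => y /c_Px'_0->; rewrite mul0r.
case/forall_inPn => y Px'y nz_cy.
have [Py yx] := andP Px'y.
have [a sa nz_yxa] := dist y x Py Px yx.
pose d_ y := c_ y * (y a - x a).
have dist' : {in [predD1 P & x] &, forall y z : G, y != z -> exists2 a, s a = a & y a != z a}.
  by move=> u v /andP[_ Pu] /andP[_ Pv]; apply: dist.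
have /IH_P[||b sb nz_sumb] : d_ y != 0 by rewrite mulf_neq0 // subr_eq0.
- by rewrite Py.
- by move=> u v /andP[Pu _] /andP[Pv _]; apply: dist.

have [sumb_0|] := eqVneq (\sum_(z | P z) c_ z * z b) 0; last by exists b.
exists (a * b); first by rewrite galfM sa sb.
rewrite -subr_eq0 -[z in _ - z](mulr0 (x a)) -[in z in _ - z]sumb_0.
rewrite mulr_sumr -sumrB (bigD1 x Px) galfM /= mulrCA subrr add0r.
congr (_ != 0): nz_sumb; apply: eq_bigr => z _.
by rewrite mulrCA galfM -mulrBr -mulrBl mulrA.
Qed.

Lemma sfix_matrix (l : seq G) : uniq l ->
  {in l &, forall y z : G, y != z -> exists2 a, s a = a & y a != z a} ->
  exists w : (size l).-tuple L, (forall j, s (tnth w j) = tnth w j) /\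
    \matrix_(i, j < size l) (nth 1%g l i) (tnth w j) \in unitmx.
Proof.
elim: l => [|x l IHs] Uxs dist.
  exists [tuple]; split; first by case.
  by rewrite flatmx0 -(flatmx0 1%:M) unitmx1.
have [s'x Us]: x \notin l /\ uniq l by apply/andP.
have dist' : {in l &, forall y z : G, y != z -> exists2 a, s a = a & y a != z a}.
  by move=> u v lu lv; apply: dist; rewrite inE ?lu ?lv orbT.
have{IHs} [w [Ew uM]] := IHs Us dist'; set M := \matrix_(i, j) _ in uM.
pose a := \row_i x (tnth w i) *m invmx M.
pose c_ y := oapp (a 0) (-1) (insub (index y l)).
have cx_n1 : c_ x = -1 by rewrite /c_ insubN ?index_mem.
have nz_cx : c_ x != 0 by rewrite cx_n1 oppr_eq0 oner_neq0.
have Px: [pred y in x :: l] x := mem_head x l.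
have [w0 Ew0 nzS] := indep Px nz_cx dist.
exists [tuple of w0 :: w]; split.
  move=> j; have : tnth [tuple of w0 :: w] j \in w0 :: w := mem_tnth _ _.
  rewrite inE => /orP[/eqP->|/tnthP[k ->]] //; exact: Ew.
rewrite unitmxE -[\det _]mul1r; set M1 := \matrix_(i, j < 1 + size l) _.
have <-: \det (block_mx 1 (- a) 0 1%:M) = 1 by rewrite det_ublock !det1 mulr1.
rewrite -det_mulmx -[M1]submxK mulmx_block !mul0mx !mul1mx !add0r !mulNmx.
have ->: drsubmx M1 = M by apply/matrixP => i j; rewrite !mxE !(tnth_nth 0).
have ->: ursubmx M1 - a *m M = 0.
  by apply/rowP=> i; rewrite mulmxKV // !mxE !(tnth_nth 0) subrr.
rewrite det_lblock unitrM andbC  -(unitmxE M) uM unitfE -oppr_eq0.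
congr (_ != 0): nzS; rewrite [_ - _]mx11_scalar det_scalar !mxE opprB /=.
rewrite -big_uniq // big_cons /= cx_n1 mulN1r addrC; congr (_ + _).
rewrite (big_nth 1%g) big_mkord; apply: eq_bigr => j _.
by rewrite /c_ index_uniq // valK; congr (_ * _); rewrite !mxE.
Qed.

End Mat.

Section SubZ.
Variables (W : zmodType) (D : W -> Prop).
Hypothesis HD : subgroupP D.
Definition pD : pred W := fun w => if excluded_middle_informative (D w) then true else false.
Lemma pDP w : reflect (D w) (pD w).
Proof. rewrite /pD; case: excluded_middle_informative => h; constructor => //. Qed.
Lemma pD_zmod : zmod_closed pD.
Proof.
case: HD => h0 hD hN; split; first by apply/pDP.
by move=> x y /pDP hx /pDP hy; apply/pDP; apply: hD => //; apply: hN.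
Qed.
HB.instance Definition _ := GRing.isZmodClosed.Build W pD pD_zmod.
Definition VD := let _ := HD in {w : W | pD w}.
HB.instance Definition _ := [isSub of VD for (@sval W pD)].
HB.instance Definition _ := [Choice of VD by <:].
HB.instance Definition _ := [SubChoice_isSubZmodule of VD by <:].
Definition toVD (w : W) : VD := insubd (0 : VD) w.
Lemma toVDK w : D w -> val (toVD w) = w.
Proof. by move=> Dw; rewrite /toVD insubdK //; apply/pDP. Qed.
Lemma toVD_add x y : D x -> D y -> toVD (x + y) = toVD x + toVD y.
Proof.
case: HD => h0 hD hN => Dx Dy; apply: val_inj => /=.
by rewrite toVDK ?toVDK //; apply: hD.
Qed.
End SubZ.

Notation dom P := (@sm_dom _ P).
Notation act P := (@sm_act _ P).

Section Helpers.
Variable (W V : zmodType) (d : W -> Prop).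
Hypothesis Hd : subgroupP d.

Lemma sg_sum (m : nat) (x : 'I_m -> W) : (forall k, d (x k)) -> d (\sum_k x k).
Proof.
case: Hd => h0 hD _ hx; elim/big_ind: _ => //.
Qed.

Lemma add_on0 (g : W -> V) : additive_on d g -> g 0 = 0.
Proof.
case: Hd => h0 _ _ hg; have := hg 0 0 h0 h0; rewrite addr0 => /eqP.
by rewrite -subr_eq0 opprD addrA subrr add0r oppr_eq0 eq_sym => /eqP.
Qed.

Lemma add_on_sum (g : W -> V) (m : nat) (x : 'I_m -> W) :
  additive_on d g -> (forall k, d (x k)) -> g (\sum_k x k) = \sum_k g (x k).
Proof.
move=> hg; elim: m x => [|m IH] x hx; first by rewrite !big_ord0 add_on0.
rewrite !big_ord_recr /= hg ?IH //; last exact: sg_sum.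
Qed.

Lemma add_onN (g : W -> V) x : additive_on d g -> d x -> g (- x) = - g x.
Proof.
case: Hd => h0 hD hN hg dx; apply/eqP; rewrite -subr_eq0 opprK.
by rewrite -hg ?addNr ?add_on0 //; apply: hN.
Qed.
End Helpers.

Section Span.
Variables (T : zmodType) (S : T -> Prop) (P Q : smod T) (W : zmodType)
  (d : W -> Prop) (b : sm_car P -> sm_car Q -> W).
Lemma tensor_span (D : W -> Prop) : is_tensor S d b -> subgroupP D ->
  (forall p q, dom P p -> dom Q q -> D (b p q)) -> forall w, d w -> D w.
Proof.
move=> [sgd bd bal univ] HD Db.
pose f p q := toVD HD (b p q).
have balf : balanced S f.
  case: bal => b1 b2 b3; split.
  - by move=> p Pp x y Qx Qy; rewrite /f b1 // toVD_add //; apply: Db.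
  - by move=> q Qq x y Px Py; rewrite /f b2 // toVD_add //; apply: Db.
  - by move=> s p q Ss Pp Qq; rewrite /f b3.
have [[g [gadd gb]] _] := univ _ f balf.
have [_ uniq] := univ _ b bal.
move=> w dw.
have <- : val (g w) = w.
  apply: (uniq (fun w => val (g w)) id) => //.
  - by move=> x y dx dy; rewrite gadd // raddfD.
  - by move=> p q Pp Qq; rewrite gb // toVDK //; apply: Db.
by apply/pDP; apply: valP.
Qed.
End Span.

Section FF.
Variables (T : zmodType) (one : T) (mul : T -> T -> T) (S : T -> Prop) (M : smod T).
Variables (m : nat) (e : 'I_m -> sm_car M) (c : 'I_m -> sm_car M -> T) (k0 : 'I_m).
Hypotheses (S0 : S 0) (hsgM : subgroupP (dom M)) (he : forall k, dom M (e k))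
  (hcS : forall k x, dom M x -> S (c k x))
  (hcadd : forall k, additive_on (dom M) (c k))
  (hcact : forall k s x, S s -> dom M x -> c k (act M s x) = mul s (c k x))
  (hce : forall k j, c k (e j) = if k == j then one else 0)
  (hdec : forall x, dom M x -> x = \sum_k act M (c k x) (e k))
  (hactdom : forall s x, S s -> dom M x -> dom M (act M s x))
  (hcomm : forall s t, S s -> S t -> mul s t = mul t s).

Lemma act0 (P : smod T) p : is_smod one mul S P -> dom P p -> act P 0 p = 0.
Proof.
case=> _ [a1 a2 a3 a4 a5] Pp; have := a3 0 0 p S0 S0 Pp; rewrite addr0 => /eqP.
by rewrite -subr_eq0 opprD addrA subrr add0r oppr_eq0 eq_sym => /eqP.
Qed.

Lemma coord_map (P : smod T) (W : zmodType) (d : W -> Prop) (b : sm_car P -> sm_car M -> W) k :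
  is_smod one mul S P -> is_tensor S d b ->
  exists phi : W -> sm_car P, additive_on d phi /\
    forall p x, dom P p -> dom M x -> phi (b p x) = act P (c k x) p.
Proof.
move=> [sgP [a1 a2 a3 a4 a5]] [sgd bd bal univ].
have balF : balanced S (fun p x => act P (c k x) p).
  split.
  - by move=> p Pp x y Mx My /=; rewrite hcadd // a3 //; apply: hcS.
  - by move=> x Mx p q Pp Pq /=; rewrite a2 //; apply: hcS.
  - move=> s p x Ss Pp Mx /=.
    rewrite hcact // -a4 //; last exact: hcS.
    by rewrite hcomm //; apply: hcS.
have [[g [ga gb]] _] := univ _ _ balF.
by exists g; split.
Qed.

Lemma span_basis (P : smod T) (W : zmodType) (d : W -> Prop) (b : sm_car P -> sm_car M -> W) :
  is_smod one mul S P -> is_tensor S d b -> forall w, d w ->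
  exists p : 'I_m -> sm_car P, (forall k, dom P (p k)) /\ w = \sum_k b (p k) (e k).
Proof.
move=> sP tb; have [sgP [a1 a2 a3 a4 a5]] := sP; have [sgd bd [b1 b2 b3] univ] := tb.
apply: (tensor_span tb).
- have [h0 hD hN] := sgP; split.
  + exists (fun _ => 0); split => // ; symmetry; apply: big1 => k _.
    exact: (add_on0 sgP (b2 _ (he k))).
  + move=> x y [p [Pp ->]] [q [Pq ->]]; exists (fun k => p k + q k); split.
      by move=> k; apply: hD.
    by rewrite -big_split /=; apply: eq_bigr => k _; rewrite b2.
  + move=> x [p [Pp ->]]; exists (fun k => - p k); split; first by move=> k; apply: hN.
    rewrite -sumrN; apply: eq_bigr => k _.
    by have := add_onN sgP (b2 _ (he k)) (Pp k).
- move=> p x Pp Mx; exists (fun k => act P (c k x) p); split.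
    by move=> k; apply: a1 => //; apply: hcS.
  rewrite {1}(hdec Mx) (add_on_sum hsgM (b1 _ Pp)); last first.
    by move=> k; apply: hactdom => //; apply: hcS.
  by apply: eq_bigr => k _; rewrite b3 //; apply: hcS.
Qed.

Lemma free_ff : faithfully_flat one mul S M.
Proof.
split.
- move=> P Q f sP sQ [fd fa fl] finj W1 W2 d1 d2 b1 b2 t1 t2 g ga gd gb w w' dw dw' gw.
  have [p [Pp ew]] := span_basis sP t1 dw.
  have [p' [Pp' ew']] := span_basis sP t1 dw'.
  rewrite ew ew' in gw *.
  have [sgd1 bd1 _ _] := t1; have [sgd2 bd2 _ _] := t2.
  suff -> : p = p' by [].
  apply: functional_extensionality => j; apply: finj => //.
  have [psi [psia psib]] := coord_map j sQ t2.
  have key : forall (r : 'I_m -> sm_car P), (forall k, dom P (r k)) ->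
      psi (g (\sum_k b1 (r k) (e k))) = f (r j).
    move=> r Pr; rewrite (add_on_sum sgd1 ga); last by move=> k; apply: bd1.
    rewrite (add_on_sum sgd2 psia); last by move=> k; apply: gd; apply: bd1.
    rewrite (bigD1 j) //= big1 ?addr0.
      rewrite gb // psib; [|by apply: fd|by []].
      by rewrite hce eqxx; have [_ [_ _ _ _ a5]] := sQ; apply: a5; apply: fd.
    move=> k kj; rewrite gb // psib; [|by apply: fd|by []].
    by rewrite hce eq_sym (negbTE kj); apply: act0 => //; apply: fd.
  by rewrite -(key p) // -(key p') // gw.
- move=> P sP W d b tb d0 p Pp.
  have [phi [phia phib]] := coord_map k0 sP tb.
  have [sgd bd _ _] := tb.
  have [_ [_ _ _ _ a5]] := sP.
  have h1 : act P (c k0 (e k0)) p = p by rewrite hce eqxx a5.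
  apply: etrans (esym h1) _; rewrite -(phib p (e k0)) // (d0 (b p (e k0))); first exact: (add_on0 sgd phia).
  exact: bd.
Qed.
End FF.

Section TensorGal.
Variables (T : zmodType) (mul : T -> T -> T) (I : finType) (coact : I -> T -> T)
  (S : T -> Prop).
Let Zm := Zmod mul.
Let d := fun f : {ffun I -> T} => forall h, Defs.centerP mul (f h).
Variables (m : nat) (e : 'I_m -> T) (c : 'I_m -> T -> T) (a : 'I_m -> {ffun I -> T} -> T).
Hypotheses (hsg : subgroupP d) (hsgZ : subgroupP (Defs.centerP mul))
  (he : forall k, Defs.centerP mul (e k))
  (hcS : forall k x, Defs.centerP mul x -> S (c k x))
  (hdec : forall x, Defs.centerP mul x -> x = \sum_k mul (c k x) (e k))
  (hmulZ : forall s x, S s -> Defs.centerP mul x -> Defs.centerP mul (mul s x))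
  (haZ : forall k w, d w -> Defs.centerP mul (a k w))
  (haadd : forall k, additive_on d (a k))
  (hgmd : forall p q, Defs.centerP mul p -> Defs.centerP mul q -> d (galois_map mul coact p q))
  (hbal : balanced (P := Zm) (Q := Zm) S (galois_map mul coact))
  (hwdec : forall w, d w -> w = \sum_k galois_map mul coact (a k w) (e k))
  (hagm : forall k p q, Defs.centerP mul p -> Defs.centerP mul q ->
      a k (galois_map mul coact p q) = mul (c k q) p).

Lemma tensor_gal : is_tensor (P := Zm) (Q := Zm) S d (galois_map mul coact).
Proof.
split => //.
move=> V f [f1 f2 f3]; split.
- exists (fun w => \sum_k f (a k w) (e k)); split.
    move=> x y dx dy; rewrite -big_split /=; apply: eq_bigr => k _.
    rewrite haadd // f2 //; [exact: he|exact: (haZ k dx)|exact: (haZ k dy)].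
  move=> p q Zp Zq.
  transitivity (\sum_k f (mul (c k q) p) (e k)); first by apply: eq_bigr => k _; rewrite hagm.
  rewrite {2}(hdec Zq) (add_on_sum hsgZ (f1 p Zp)); last first.
    by move=> k; apply: hmulZ => //; apply: hcS.
  apply: eq_bigr => k _; apply: (f3 (c k q) p (e k)) => //; try exact: he; exact: hcS.
- move=> g1 g2 ga1 ga2 gb1 gb2 w dw.
  rewrite (hwdec dw) (add_on_sum hsg ga1); last by move=> k; apply: hgmd => //; apply: haZ.
  rewrite (add_on_sum hsg ga2); last by move=> k; apply: hgmd => //; apply: haZ.
  by apply: eq_bigr => k _; rewrite gb1 ?gb2 //; try exact: he; exact: (haZ k dw).
Qed.
End TensorGal.

Section Main.
Variables (F : fieldType) (L : splittingFieldType F) (s : gal_of (fullv : {vspace L}))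
  (H : {group gal_of (fullv : {vspace L})}).
Local Notation G := (gal_of (fullv : {vspace L})).
Local Notation I := {x : G | x \in H}.
Local Notation coact := (ore_coact (H := H)).
Hypothesis hcomm : forall h, h \in H -> (h * s = s * h)%g.

Lemma galfD (g : G) (a b : L) : g (a + b) = g a + g b.
Proof. exact: rmorphD. Qed.
Lemma galfN (g : G) (a : L) : g (- a) = - g a.
Proof. exact: rmorphN. Qed.
Lemma galf0 (g : G) : g 0 = 0.
Proof. exact: rmorph0. Qed.
Lemma galf_sum (g : G) (m : nat) (f : 'I_m -> L) : g (\sum_k f k) = \sum_k g (f k).
Proof. exact: rmorph_sum. Qed.

Lemma coact_coef (h : I) p i : (coact h p)`_i = val h p`_i.
Proof. by rewrite /ore_coact coef_map_id0 //; apply: rmorph0. Qed.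

Lemma scomm (h : I) a : s (val h a) = val h (s a).
Proof. by rewrite -galMf hcomm ?galMf //; apply: valP. Qed.

Lemma Zc_supp (q : {poly L}) : Zc s q -> forall i, ~~ (#[s]%g %| i)%N -> q`_i = 0.
Proof. by case=> _ h i; apply: contraNeq; apply: h. Qed.

Lemma Zc_intro (q : {poly L}) : (forall i, s q`_i = q`_i) ->
  (forall i, ~~ (#[s]%g %| i)%N -> q`_i = 0) -> Zc s q.
Proof. by move=> h1 h2; split => // i; apply: contraNT => /h2 ->. Qed.

Lemma Zc0 : Zc s 0.
Proof. by apply: Zc_intro => i; rewrite coef0 // galf0. Qed.

Lemma ZcD p q : Zc s p -> Zc s q -> Zc s (p + q).
Proof.
move=> hp hq; apply: Zc_intro => i; rewrite coefD.
  by rewrite galfD; congr (_ + _); [case: hp | case: hq].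
by move=> ni; rewrite (Zc_supp hp) // (Zc_supp hq) // addr0.
Qed.

Lemma ZcN p : Zc s p -> Zc s (- p).
Proof.
move=> hp; apply: Zc_intro => i; rewrite coefN.
  by rewrite galfN; congr (- _); case: hp.
by move=> ni; rewrite (Zc_supp hp) // oppr0.
Qed.

Lemma ZcZ c p : s c = c -> Zc s p -> Zc s (c *: p).
Proof.
move=> hc hp; apply: Zc_intro => i; rewrite coefZ.
  by rewrite galfM hc; congr (_ * _); case: hp.
by move=> ni; rewrite (Zc_supp hp) // mulr0.
Qed.

Lemma ZcC c : s c = c -> Zc s c%:P.
Proof.
move=> hc; apply: Zc_intro => i; rewrite coefC.
  by case: (i == 0)%N => //; rewrite galf0.
by case: i => // ; rewrite dvdn0.
Qed.

Lemma ZcM p q : Zc s p -> Zc s q -> Zc s (p * q).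
Proof.
move=> hp hq; apply: Zc_intro => i; rewrite coefM.
  rewrite galf_sum; apply: eq_bigr => j _.
  by rewrite galfM; congr (_ * _); [case: hp | case: hq].
move=> ni; apply: big1 => j _.
have [dj|ndj] := boolP (#[s]%g %| j)%N; last by rewrite (Zc_supp hp) // mul0r.
rewrite (Zc_supp hq) ?mulr0 //; apply: contra ni => dij.
have -> : i = (j + (i - j))%N by rewrite subnKC // -ltnS.
by rewrite dvdn_add.
Qed.

Lemma Zc_sum (m : nat) (f : 'I_m -> {poly L}) : (forall k, Zc s (f k)) -> Zc s (\sum_k f k).
Proof. move=> hf; elim/big_ind: _ => //; [exact: Zc0 | exact: ZcD]. Qed.

Lemma Zc_coact (h : I) p : Zc s p -> Zc s (coact h p).
Proof.
move=> hp; apply: Zc_intro => i; rewrite coact_coef.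
  by rewrite scomm; congr (val h _); case: hp.
by move=> ni; rewrite (Zc_supp hp) // galf0.
Qed.


Lemma coactD (h : I) p q : coact h (p + q) = coact h p + coact h q.
Proof. by apply/polyP => i; rewrite coefD !coact_coef coefD galfD. Qed.
Lemma coactN (h : I) p : coact h (- p) = - coact h p.
Proof. by apply/polyP => i; rewrite coefN !coact_coef coefN galfN. Qed.
Lemma coactZ (h : I) c p : coact h (c *: p) = val h c *: coact h p.
Proof. by apply/polyP => i; rewrite coefZ !coact_coef coefZ galfM. Qed.
Lemma coactC (h : I) c : coact h c%:P = (val h c)%:P.
Proof. by apply/polyP => i; rewrite !coefC coact_coef coefC; case: (i == 0)%N; rewrite ?galf0. Qed.
Lemma coactM (h : I) p q : coact h (p * q) = coact h p * coact h q.
Proof.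
apply/polyP => i; rewrite coact_coef !coefM galf_sum; apply: eq_bigr => j _.
by rewrite galfM !coact_coef.
Qed.
Lemma coact_sum (h : I) (m : nat) (f : 'I_m -> {poly L}) :
  coact h (\sum_k f k) = \sum_k coact h (f k).
Proof.
apply/polyP => i; rewrite coact_coef !coef_sum galf_sum; apply: eq_bigr => j _.
by rewrite coact_coef.
Qed.

Definition mulI (g h : I) : I := exist _ (val g * val h)%g (groupM (valP g) (valP h)).
Lemma coact_comp (g h : I) p : coact h (coact g p) = coact (mulI g h) p.
Proof. by apply/polyP => i; rewrite !coact_coef galMf. Qed.

Definition oneI : I := exist _ 1%g (group1 H).
Lemma coact1 p : coact oneI p = p.
Proof. by apply/polyP => i; rewrite coact_coef gal_id. Qed.

Lemma Zco_iff z : Zco (ore_mul s) coact z <-> Zc s z /\ forall (h : I) i, val h z`_i = z`_i.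
Proof.
rewrite /Zco; split => -[hz hc]; split.
- by apply/cent_Z.
- by move=> h i; rewrite -coact_coef hc.
- by apply/cent_Z.
- by move=> h; apply/polyP => i; rewrite coact_coef hc.
Qed.

Local Notation m := #|{: I}|.
Definition gi (i : 'I_m) : G := val (enum_val i).
Variables (E : 'I_m -> L) (hE : forall k, s (E k) = E k).
Definition Mx := \matrix_(i, k < m) gi i (E k).
Hypothesis hM : Mx \in unitmx.
Definition Minv := invmx Mx.

Lemma Minv_fix k i : s (Minv k i) = Minv k i.
Proof.
have eM : map_mx s Minv = Minv.
  rewrite /Minv map_invmx; congr invmx; apply/matrixP => i' k'.
  rewrite !mxE /gi; apply: etrans (scomm (enum_val i') (E k')) _; by rewrite hE.
by rewrite -{2}eM mxE.
Qed.


Definition pih (h : I) (i : 'I_m) : 'I_m := enum_rank (mulI (enum_val i) h).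
Lemma pih_inj h : injective (pih h).
Proof.
move=> i j /enum_rank_inj => /(congr1 val) /= /mulIg /val_inj; exact: enum_val_inj.
Qed.
Definition sig_h h := perm (@pih_inj h).
Lemma gi_sig h i : gi (sig_h h i) = (gi i * val h)%g.
Proof. by rewrite permE /gi /pih enum_rankK. Qed.

Lemma Minv_perm (h : I) k i : val h (Minv k i) = Minv k (sig_h h i).
Proof.
pose R := row_perm (sig_h h) Mx; pose N := col_perm (sig_h h) Minv.
have eR : map_mx (val h) Mx = R.
  apply/matrixP => i' k'; rewrite !mxE gi_sig galMf.
  done.
have XR : map_mx (val h) Minv *m R = 1%:M.
  rewrite -eR -map_mxM /Minv mulVmx //; exact: map_mx1.
have RN : R *m N = 1%:M.
  rewrite /R /N row_permE col_permE mulmxA -[perm_mx _ *m Mx *m Minv]mulmxA.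
  by rewrite /Minv mulmxV // mulmx1 -perm_mxM mulgV perm_mx1.
have : map_mx (val h) Minv = N.
  by rewrite -[LHS]mulmx1 -RN mulmxA XR mul1mx.
by move/matrixP/(_ k i); rewrite !mxE.
Qed.


Definition cf (k : 'I_m) (q : {poly L}) := \sum_i Minv k i *: coact (enum_val i) q.
Definition af (k : 'I_m) (w : {ffun I -> {poly L}}) := \sum_i Minv k i *: w (enum_val i).

Lemma sumA (v : 'I_m -> {poly L}) j :
  \sum_k (\sum_i Minv k i *: v i) * (gi j (E k))%:P = v j.
Proof.
transitivity (\sum_k \sum_i (Mx j k * Minv k i) *: v i).
  apply: eq_bigr => k _; rewrite mulr_suml; apply: eq_bigr => i _.
  by rewrite mulrC mul_polyC scalerA !mxE.
transitivity (\sum_i (\sum_k Mx j k * Minv k i) *: v i).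
  by rewrite exchange_big; apply: eq_bigr => i _; rewrite scaler_suml.
transitivity (\sum_i (1%:M : 'M[L]_m) j i *: v i).
  apply: eq_bigr => i _; congr (_ *: _).
  by have := congr1 (fun A : 'M[L]_m => A j i) (mulmxV hM); rewrite mxE.
rewrite (bigD1 j) //= big1 ?addr0; first by rewrite mxE eqxx scale1r.
by move=> i ij; rewrite mxE eq_sym (negbTE ij) scale0r.
Qed.

Lemma sumB k j : \sum_i Minv k i * gi i (E j) = (k == j)%:R.
Proof.
have := congr1 (fun A : 'M[L]_m => A k j) (mulVmx hM); rewrite !mxE => <-.
by apply: eq_bigr => i _; rewrite mxE.
Qed.

Lemma cf_e k j : cf k (E j)%:P = ((k == j)%:R)%:P.
Proof.
rewrite /cf -sumB rmorph_sum; apply: eq_bigr => i _.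
by rewrite coactC -mul_polyC -polyCM.
Qed.

Lemma Zc_cf k q : Zc s q -> Zc s (cf k q).
Proof. by move=> hq; apply: Zc_sum => i; apply: ZcZ; [apply: Minv_fix | apply: Zc_coact]. Qed.

Lemma cf_fix (h : I) k q : coact h (cf k q) = cf k q.
Proof.
rewrite /cf coact_sum.
transitivity (\sum_i Minv k (sig_h h i) *: coact (enum_val (sig_h h i)) q).
  apply: eq_bigr => i _; rewrite coactZ Minv_perm coact_comp; congr (_ *: coact _ q).
  by apply: val_inj; have := gi_sig h i; rewrite /gi => ->.
by rewrite [RHS](reindex_inj (@perm_inj _ (sig_h h))).
Qed.

Lemma cf_add k : {morph cf k : x y / x + y}.
Proof.
move=> x y; rewrite /cf -big_split /=; apply: eq_bigr => i _.
by rewrite coactD scalerDr.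
Qed.

Lemma cf_dec q : Zc s q -> q = \sum_k cf k q * (E k)%:P.
Proof.
move=> hq; pose i0 := enum_rank oneI.
have gi0 : gi i0 = 1%g by rewrite /gi /i0 enum_rankK.
rewrite -[in LHS](coact1 q) -[oneI](enum_rankK) -/i0.
rewrite -(sumA (fun i => coact (enum_val i) q) i0); apply: eq_bigr => k _.
by rewrite gi0 gal_id.
Qed.

Lemma cf_mul k z q : Zco (ore_mul s) coact z -> cf k (z * q) = z * cf k q.
Proof.
move=> /Zco_iff [_ hz]; rewrite /cf mulr_sumr; apply: eq_bigr => i _.
rewrite coactM -scalerAr; congr (_ *: (_ * _)).
by apply/polyP => j; rewrite coact_coef hz.
Qed.

Lemma af_add k : {morph af k : x y / x + y}.
Proof.
move=> x y; rewrite /af -big_split /=; apply: eq_bigr => i _.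
by rewrite ffunE scalerDr.
Qed.

Lemma Zc_af k (w : {ffun I -> {poly L}}) : (forall h, Zc s (w h)) -> Zc s (af k w).
Proof. by move=> hw; apply: Zc_sum => i; apply: ZcZ; [apply: Minv_fix | apply: hw]. Qed.

End Main.




Section Fin.
Variables (F : fieldType) (L : splittingFieldType F) (s : gal_of (fullv : {vspace L}))
  (H : {group gal_of (fullv : {vspace L})}).
Local Notation G := (gal_of (fullv : {vspace L})).
Local Notation I := {x : G | x \in H}.
Local Notation coact := (ore_coact (H := H)).
Hypothesis hcomm : forall h, h \in H -> (h * s = s * h)%g.
Local Notation m := #|{: I}|.
Variables (E : 'I_m -> L) (hE : forall k, s (E k) = E k).
Hypothesis hM : Mx E \in unitmx.
Local Notation cP := (Defs.centerP (ore_mul s)).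
Local Notation S := (Zco (ore_mul s) coact).
Local Notation d := (fun f : {ffun I -> {poly L}} => forall h, cP (f h)).

Lemma sgZ : subgroupP cP.
Proof.
split.
- by apply/cent_Z; apply: Zc0.
- by move=> x y /cent_Z hx /cent_Z hy; apply/cent_Z; apply: ZcD.
- by move=> x /cent_Z hx; apply/cent_Z; apply: ZcN.
Qed.

Lemma sgd : subgroupP d.
Proof.
have [h0 hD hN] := sgZ; split.
- by move=> h; rewrite ffunE.
- by move=> x y hx hy h; rewrite ffunE; apply: hD.
- by move=> x hx h; rewrite ffunE; apply: hN.
Qed.

Lemma heZ k : cP (E k)%:P.
Proof. by apply/cent_Z; apply: ZcC. Qed.

Lemma hcS k x : cP x -> S (cf E k x).
Proof.
move=> /cent_Z hx; apply/Zco_iff; split; first exact: (Zc_cf hcomm hE).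
by move=> h i; rewrite -coact_coef (cf_fix hM).
Qed.

Lemma hdec x : cP x -> x = \sum_k ore_mul s (cf E k x) (E k)%:P.
Proof.
move=> /cent_Z hx; rewrite {1}(cf_dec hM hx); apply: eq_bigr => k _.
by rewrite ore_mulZl //; apply: (Zc_cf hcomm hE).
Qed.

Lemma hmulZ s0 x : S s0 -> cP x -> cP (ore_mul s s0 x).
Proof.
move=> /Zco_iff [hs _] /cent_Z hx; apply/cent_Z; rewrite ore_mulZl //; exact: ZcM.
Qed.


Lemma haZ k (w : {ffun I -> {poly L}}) : d w -> cP (af E k w).
Proof. by move=> dw; apply/cent_Z; apply: (Zc_af hcomm hE) => h; apply/cent_Z. Qed.

Lemma haadd k : additive_on d (af E k).
Proof. by move=> x y _ _; apply: af_add. Qed.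

Lemma hgmd p q : cP p -> cP q -> d (galois_map (ore_mul s) coact p q).
Proof.
move=> /cent_Z hp /cent_Z hq h; rewrite ffunE ore_mulZl //; apply/cent_Z.
by apply: ZcM => //; apply: Zc_coact.
Qed.

Lemma hbal : balanced (P := Zmod (ore_mul s)) (Q := Zmod (ore_mul s)) S
  (galois_map (ore_mul s) coact).
Proof.
split.
- move=> p hp x y hx hy; have hp' : Zc s p by apply/cent_Z.
  by apply/ffunP => h; rewrite !ffunE !ore_mulZl // coactD mulrDr.
- move=> q hq x y hx hy; have hx' : Zc s x by apply/cent_Z.
  have hy' : Zc s y by apply/cent_Z.
  apply/ffunP => h; rewrite !ffunE !ore_mulZl //; last exact: ZcD.
  by rewrite mulrDl.
- move=> s0 p q hs hp hq; have [hs' hsc] := hs.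
  have hp' : Zc s p by apply/cent_Z.
  have hq' : Zc s q by apply/cent_Z.
  have hs'' : Zc s s0 by apply/cent_Z.
  apply/ffunP => h; rewrite !ffunE /=.
  rewrite (ore_mulZl _ hs'') (ore_mulZl _ hs'') (ore_mulZl _ hp').
  rewrite ore_mulZl; last exact: ZcM.
  by rewrite coactM hsc mulrCA mulrA.
Qed.

Lemma hwdec (w : {ffun I -> {poly L}}) : d w ->
  w = \sum_k galois_map (ore_mul s) coact (af E k w) (E k)%:P.
Proof.
move=> dw; apply/ffunP => h; rewrite sum_ffunE.
have hw : forall h, Zc s (w h) by move=> h'; apply/cent_Z.
transitivity (\sum_k af E k w * (gi (enum_rank h) (E k))%:P); last first.
  apply: eq_bigr => k _; rewrite ffunE coactC ore_mulZl; last exact: (Zc_af hcomm hE).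
  by rewrite /gi enum_rankK.
by rewrite (sumA hM (fun i => w (enum_val i))) enum_rankK.
Qed.

Lemma hagm k p q : cP p -> cP q ->
  af E k (galois_map (ore_mul s) coact p q) = ore_mul s (cf E k q) p.
Proof.
move=> /cent_Z hp /cent_Z hq; rewrite ore_mulZl; last exact: (Zc_cf hcomm hE).
rewrite /af /cf mulr_suml; apply: eq_bigr => i _.
by rewrite ffunE ore_mulZl // -scalerAl mulrC.
Qed.

Lemma part3 : is_tensor (P := Zmod (ore_mul s)) (Q := Zmod (ore_mul s)) S d
  (galois_map (ore_mul s) coact).
Proof.
exact: (@tensor_gal _ _ _ _ _ m (fun k => (E k)%:P) (cf E) (af E) sgd sgZ heZ hcS hdec
  hmulZ haZ haadd hgmd hbal hwdec hagm).
Qed.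

Lemma S0 : S 0.
Proof. by apply/Zco_iff; split; [exact: Zc0 | move=> h i; rewrite coef0 galf0]. Qed.

Lemma hcact k s0 x : S s0 -> cP x -> cf E k (ore_mul s s0 x) = ore_mul s s0 (cf E k x).
Proof.
move=> hs /cent_Z hx; have [/cent_Z hs' _] := hs.
by rewrite !(ore_mulZl _ hs') (cf_mul E k x hs).
Qed.

Lemma hce k j : cf E k (E j)%:P = if k == j then 1 else 0.
Proof. by rewrite (cf_e hM); case: eqP => _; rewrite ?mulr1n ?mulr0n ?polyC0. Qed.

Lemma hcommS s1 t : S s1 -> S t -> ore_mul s s1 t = ore_mul s t s1.
Proof. by move=> [h1 _] _; apply: h1. Qed.

Lemma part4 : faithfully_flat 1 (ore_mul s) S (Zmod (ore_mul s)).
Proof.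
exact: (@free_ff _ 1 (ore_mul s) S (Zmod (ore_mul s)) m (fun k => (E k)%:P) (cf E)
  (enum_rank (oneI H)) S0 sgZ heZ hcS (fun k => fun x y _ _ => cf_add E k x y)
  hcact hce hdec hmulZ hcommS).
Qed.

Lemma part1 c : ore_over (fixedField H) c <-> coinvP coact c.
Proof.
split.
- move=> hc h; apply/polyP => i; rewrite coact_coef.
  by have /(fixedFieldP (memvf _)) := hc i; apply; apply: valP.
- move=> hc i; apply/(fixedFieldP (memvf _)) => x Hx.
  by rewrite -(coact_coef (exist _ x Hx)) hc.
Qed.

Lemma part2 z (h : I) : cP z -> cP (coact h z).
Proof. by move=> /cent_Z hz; apply/cent_Z; apply: Zc_coact. Qed.

Lemma cg : centrally_galois 1 (ore_mul s) coact (ore_over (fixedField H)).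
Proof. split; [exact: part1 | exact: part2 | exact: part3 | exact: part4]. Qed.

End Fin.


Unset Implicit Arguments.

Theorem corollary3p18 (F : fieldType) (L : splittingFieldType F)
    (K : {subfield L}) (H N : {group gal_of (fullv : {vspace L})})
    (s : gal_of (fullv : {vspace L})) :
  galois K fullv ->
  (N * H)%g = 'Gal(fullv / K)%g ->
  (N :&: H)%g = 1%g ->
  N = <[s]>%g :> {set _} ->
  s \in 'Z('Gal(fullv / K))%g ->
  centrally_galois 1 (ore_mul s) (ore_coact (H := H))
    (ore_over (fixedField H)).
Proof.
move=> galK NH NcapH Ns sZ.
have hcomm : forall h, h \in H -> (h * s = s * h)%g.
  move=> h Hh; have /center.centerP [_ cs] := sZ.
  have hG : h \in 'Gal(fullv / K)%g by rewrite -NH -[h]mul1g mem_mulg.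
  by rewrite (cs h hG).
have hdist : {in H &, forall y z : gal_of (fullv : {vspace L}),
    y != z -> exists2 a, s a = a & y a != z a}.
  move=> y z Hy Hz yz; apply: NNPP => hn; move/negP: yz; apply; apply/eqP.
  have fixa : forall a, s a = a -> y a = z a.
    by move=> a sa; apply: NNPP => ne; apply: hn; exists a => //; apply/eqP.
  pose x := (y * z^-1)%g.
  have xN : x \in 'Gal(fullv / fixedField <[s]>)%g.
    rewrite gal_kHom ?subvf //; apply/kAHomP => a /mem_fixedFieldP[_ fa].
    have sa : s a = a by apply: fa; exact: cycle_id.
    by rewrite /x galMf fixa // -galMf mulgV gal_id.
  rewrite gal_generated genGid in xN.
  have xH : x \in H by rewrite groupM ?groupV.
  have : x \in (N :&: H)%g by rewrite inE Ns xN xH.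
  rewrite NcapH inE => /eqP x1.
  by rewrite -[y](mulgKV z y) -/x x1 mul1g.
have [E [hE hM]] : exists E : 'I_#|{: {x : gal_of (fullv : {vspace L}) | x \in H}}| -> L,
    (forall k, s (E k) = E k) /\ Mx E \in unitmx.
  pose l := map val (enum {: {x : gal_of (fullv : {vspace L}) | x \in H}}).
  have ul : uniq l by rewrite map_inj_uniq ?enum_uniq //; exact: val_inj.
  have dl : {in l &, forall y z : gal_of (fullv : {vspace L}),
      y != z -> exists2 a, s a = a & y a != z a}.
    by move=> y z /mapP[y' _ ->] /mapP[z' _ ->]; apply: hdist; apply: valP.
  have [w [hw hMw]] := sfix_matrix ul dl.
  have gen : forall n (e : size l = n), exists E : 'I_n -> L, (forall k, s (E k) = E k) /\
      \matrix_(i, j < n) (nth 1%g l i) (E j) \in unitmx.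
    by move=> n <-; exists (tnth w).
  have [E [hE hM]] := gen _ (etrans (size_map _ _) (esym (cardE _))).
  exists E; split => //; congr (_ \in unitmx): hM.
  apply/matrixP => i j; rewrite !mxE /gi (enum_val_nth (enum_val i)) /l.
  by rewrite (nth_map (enum_val i)) // -cardE.
exact: (cg hcomm hE hM).
Qed.
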